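(* Let $\mathcal U$ be the quiver whose vertices are all finite ultrametric spaces and whose edges from $X=(X,d)$ to $Y=(Y,\rho)$ are all maps $f:X\to Y$ that are either isometries (metric-preserving bijections) or contractions. Then: (i) two finite ultrametric spaces are isotypic in $\mathcal U$ if and only if they are isometric; (ii) a finite ultrametric space is a primitive vertex of $\mathcal U$ if and only if it consists of a single point; (iii) the height in $\mathcal U$ of a finite ultrametric space $(X,d)$ equals the number of non-zero elements of the set $d(X\times X)\subset\mathbb R_+$; (iv) $\mathcal U$ is a phylogenetic quiver; (v) every vertex of $\mathcal U$ is regular.
   Context: A quiver consists of a class of vertices and, for each ordered pair of vertices $(A,B)$, a set of edges $A\to B$ (loops and multiple edges allowed). An evolution of length $m\ge 0$ is a sequence $A_0\leftarrow A_1\leftarrow\cdots\leftarrow A_m$ of vertices together with edges $A_k\to A_{k-1}$ ($1\le k\le m$); $A_0$ is its initial and $A_m$ its terminal vertex. Write $A\le B$ ($A$ is an ancestor of $B$, $B$ a descendant of $A$) if there is an evolution with initial vertex $A$ and terminal vertex $B$; $A,B$ are isotypic ($A\sim B$) if $A\le B$ and $B\le A$. A vertex $A$ is primitive if every ancestor of $A$ is isotypic to $A$. A full evolution for $X$ is an evolution with primitive initial vertex and terminal vertex $X$. The height $h(X)$ is the smallest length of a full evolution for $X$ ($h(X)=\infty$ if none exists). An evolution $\alpha=(A_0\leftarrow\cdots\leftarrow A_m)$ embeds in $\beta=(B_0\leftarrow\cdots\leftarrow B_n)$ if $m\le n$ and there are integers $0\le r_0<r_1<\cdots<r_m\le n$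 with $A_k\sim B_{r_k}$ for all $k$. A universal evolution for $X$ is a full evolution for $X$ that embeds in every full evolution for $X$; $X$ is phylogenetic if it has a universal evolution. A quiver is monotonous if $h(A)\ge h(B)$ for every edge $A\to B$; it is small if the isotypy classes of its vertices form a set; it is phylogenetic if it is small, monotonous, and all its vertices are phylogenetic. The clade $\mathcal O_A$ of a vertex $A$ is the quiver formed by all descendants of $A$ and all edges between them. A vertex $A$ is regular if for every $B$ in $\mathcal O_A$ with $h(B)=h(A)$ there is an edge $B\to A$. An ultrametric space is a metric space $(X,d)$ with $X\neq\emptyset$ and $d(x,y)\le\max(d(x,z),d(y,z))$ for all $x,y,z$. For $\varepsilon>0$, a map $f:(X,d)\to(Y,\rho)$ between metric spaces is an $\varepsilon$-contraction if $f(X)=Y$ and $\rho(f(x),f(y))=d(x,y)-\varepsilon$ for all distinct $x,y\in X$; a contraction is an $\varepsilon$-contraction for some $\varepsilon>0$. *)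

(* Defs.v *)
From Stdlib Require Import Reals List Arith ClassicalEpsilon.
Import ListNotations.
Open Scope R_scope.

Record quiver := Quiver {
  vtx : Type;
  edge : vtx -> vtx -> Type }.

Section QuiverNotions.
Variable Q : quiver.
Local Notation V := (vtx Q).

(* The evolution A0 <- A1 <- ... <- Am is encoded by A0 and l = [A1;...;Am];
   its length is m = length l, initial vertex A0, terminal vertex last l A0. *)
Definition evolution (A0 : V) (l : list V) : Prop :=
  forall (k : nat) (A B : V),
    nth_error (A0 :: l) k = Some A ->
    nth_error (A0 :: l) (S k) = Some B ->
    inhabited (edge Q B A).

Definition ancestor (A B : V) : Prop :=
  exists l, evolution A l /\ last l A = B.

Definition isotypic (A B : V) : Prop := ancestor A B /\ ancestor B A.

Definition primitive_vertex (A : V) : Prop := forall B, ancestor B A -> isotypic B A.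

Definition full_evolution (A0 : V) (l : list V) (X : V) : Prop :=
  evolution A0 l /\ primitive_vertex A0 /\ last l A0 = X.

Definition has_full_evolution_of_length (X : V) (n : nat) : Prop :=
  exists A0 l, full_evolution A0 l X /\ length l = n.

Definition is_height (X : V) (n : nat) : Prop :=
  has_full_evolution_of_length X n /\
  forall m, has_full_evolution_of_length X m -> (n <= m)%nat.

(* height: None stands for infinity *)
Definition height (X : V) : option nat :=
  match excluded_middle_informative (exists n, is_height X n) with
  | left H => Some (proj1_sig (constructive_indefinite_description _ H))
  | right _ => None
  end.

(* order on N u {infinity} (None = infinity) *)
Definition ext_le (a b : option nat) : Prop :=
  match a, b with
  | _, None => True
  | None, Some _ => False
  | Some x, Some y => (x <= y)%nat
  end.

Definition embeds (A0 : V) (l : list V) (B0 : V) (l' : list V) : Prop :=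
  (length l <= length l')%nat /\
  exists r : nat -> nat,
    (forall k, (k < length l)%nat -> (r k < r (S k))%nat) /\
    (r (length l) <= length l')%nat /\
    forall k, (k <= length l)%nat ->
      isotypic (nth k (A0 :: l) A0) (nth (r k) (B0 :: l') B0).

Definition universal_evolution (A0 : V) (l : list V) (X : V) : Prop :=
  full_evolution A0 l X /\
  forall B0 l', full_evolution B0 l' X -> embeds A0 l B0 l'.

Definition phylogenetic_vertex (X : V) : Prop :=
  exists A0 l, universal_evolution A0 l X.

Definition monotonous : Prop :=
  forall (A B : V) (e : edge Q A B), ext_le (height B) (height A).

(* isotypy classes form a set: they are indexed by a type in Set *)
Definition small : Prop :=
  exists (I : Set) (cls : V -> I), forall A B, isotypic A B <-> cls A = cls B.

Definition phylogenetic : Prop :=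
  small /\ monotonous /\ forall X, phylogenetic_vertex X.

(* B is in the clade of A iff A <= B; edges of the clade are those of Q *)
Definition regular (A : V) : Prop :=
  forall B, ancestor A B -> height B = height A -> inhabited (edge Q B A).

End QuiverNotions.

Record FUM := mkFUM {
  pt : Type;
  udist : pt -> pt -> R;
  fum_finite : exists l : list pt, forall x, In x l;
  fum_nonempty : inhabited pt;
  dist_nonneg : forall x y, 0 <= udist x y;
  dist_zero : forall x y, udist x y = 0 <-> x = y;
  dist_sym : forall x y, udist x y = udist y x;
  dist_ultra : forall x y z, udist x y <= Rmax (udist x z) (udist y z) }.

Definition is_isometry (X Y : FUM) (f : pt X -> pt Y) : Prop :=
  (forall x y, f x = f y -> x = y) /\ (forall y, exists x, f x = y) /\
  (forall x y, udist Y (f x) (f y) = udist X x y).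

Definition is_contraction (X Y : FUM) (f : pt X -> pt Y) : Prop :=
  exists eps : R, 0 < eps /\
    (forall y, exists x, f x = y) /\
    (forall x y, x <> y -> udist Y (f x) (f y) = udist X x y - eps).

Definition isometric (X Y : FUM) : Prop :=
  exists f : pt X -> pt Y, is_isometry X Y f.

Definition U_edge (X Y : FUM) : Type :=
  { f : pt X -> pt Y | is_isometry X Y f \/ is_contraction X Y f }.

Definition Uquiver : quiver := Quiver FUM U_edge.

(* Main.v *)
Require Import Defs.
From Stdlib Require Import Reals List Lra Lia Classical ClassicalEpsilon FunctionalExtensionality.
Import ListNotations.
Open Scope R_scope.

Lemma ultra2 (X : FUM) x y z : udist X x y <= udist X x z \/ udist X x y <= udist X y z.
Proof. pose proof (dist_ultra X x y z) as H. unfold Rmax in H. destruct (Rle_dec _ _); [right|left]; lra. Qed.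

Lemma d_refl X x : udist X x x = 0. Proof. apply (dist_zero X). reflexivity. Qed.

Definition enum (X : FUM) : list (pt X) :=
  proj1_sig (constructive_indefinite_description _ (fum_finite X)).
Lemma enum_all X x : In x (enum X).
Proof. unfold enum. destruct constructive_indefinite_description; simpl; auto. Qed.

Lemma sig_eq {A} {P : A -> Prop} (a b : sig P) : proj1_sig a = proj1_sig b -> a = b.
Proof. destruct a, b; simpl; intros ->; f_equal; apply proof_irrelevance. Qed.

Fixpoint first_in {A} (p : A -> bool) (L : list A) (def : A) : A :=
  match L with [] => def | y :: L' => if p y then y else first_in p L' def end.

Lemma first_in_true {A} (p : A -> bool) L def :
  (exists y, In y L /\ p y = true) -> p (first_in p L def) = true.
Proof.
  induction L as [|y L IH]; simpl; intros [z [Hz Hp]]; [contradiction|].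
  destruct (p y) eqn:E; [exact E|]. apply IH. destruct Hz as [<-|Hz]; [congruence|eauto].
Qed.

Lemma first_in_ext {A} (p p' : A -> bool) L d1 d2 :
  (forall y, p y = p' y) -> (exists y, In y L /\ p y = true) ->
  first_in p L d1 = first_in p' L d2.
Proof.
  intros Hp. induction L as [|y L IH]; simpl; intros [z [Hz Hz']]; [contradiction|].
  rewrite <- Hp. destruct (p y) eqn:E; [reflexivity|]. apply IH.
  destruct Hz as [<-|Hz]; [congruence|eauto].
Qed.

Section Trunc.
Variable X : FUM.
Variable t : R.
Local Notation d := (udist X).

Definition relb (x y : pt X) : bool := if Rle_dec (d x y) (Rmax t 0) then true else false.
Lemma relb_iff x y : relb x y = true <-> d x y <= Rmax t 0.
Proof. unfold relb. destruct Rle_dec; split; intros; auto; try discriminate; contradiction. Qed.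

Lemma rel_trans x y z : d x y <= Rmax t 0 -> d y z <= Rmax t 0 -> d x z <= Rmax t 0.
Proof. intros H1 H2. pose proof (Defs.dist_sym X z y) as Hs. destruct (ultra2 X x z y) as [H|H]; lra. Qed.

Definition rep (x : pt X) : pt X := first_in (relb x) (enum X) x.

Lemma rep_rel x : d x (rep x) <= Rmax t 0.
Proof.
  apply relb_iff. apply first_in_true. exists x. split; [apply enum_all|].
  apply relb_iff. rewrite d_refl. apply Rmax_r.
Qed.

Lemma rep_eq x y : d x y <= Rmax t 0 -> rep x = rep y.
Proof.
  intros H. unfold rep. apply first_in_ext.
  - intros z. destruct (relb x z) eqn:E1, (relb y z) eqn:E2; auto.
    + exfalso. apply relb_iff in E1. assert (relb y z = true); [|congruence].
      apply relb_iff. apply (rel_trans y x z); auto. rewrite Defs.dist_sym; auto.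
    + exfalso. apply relb_iff in E2. assert (relb x z = true); [|congruence].
      apply relb_iff. apply (rel_trans x y z); auto.
  - exists x. split; [apply enum_all|]. apply relb_iff. rewrite d_refl. apply Rmax_r.
Qed.

Lemma rep_eq_iff x y : rep x = rep y <-> d x y <= Rmax t 0.
Proof.
  split; [|apply rep_eq]. intros E. pose proof (rep_rel x). pose proof (rep_rel y).
  rewrite E in H. apply (rel_trans x (rep y) y); auto. rewrite Defs.dist_sym; auto.
Qed.

Lemma rep_idem x : rep (rep x) = rep x.
Proof. symmetry. apply rep_eq. apply rep_rel. Qed.

Definition Tpt := {x : pt X | rep x = x}.

Definition Tdist (a b : Tpt) : R :=
  if excluded_middle_informative (proj1_sig a = proj1_sig b) then 0
  else d (proj1_sig a) (proj1_sig b) - t.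

Lemma Tpos (a b : Tpt) : proj1_sig a <> proj1_sig b -> Rmax t 0 < d (proj1_sig a) (proj1_sig b).
Proof.
  destruct a as [x px], b as [y py]; simpl. intros N.
  destruct (Rle_dec (d x y) (Rmax t 0)) as [H|H]; [|lra].
  exfalso. apply N. rewrite <- px, <- py. apply rep_eq; auto.
Qed.

Lemma Tdist_pos (a b : Tpt) : proj1_sig a <> proj1_sig b -> 0 < Tdist a b.
Proof.
  intros N. unfold Tdist. destruct excluded_middle_informative; [contradiction|].
  pose proof (Tpos a b N). pose proof (Rmax_l t 0). lra.
Qed.

Lemma Tdist_eq (a b : Tpt) : proj1_sig a = proj1_sig b -> Tdist a b = 0.
Proof. intros E. unfold Tdist. destruct excluded_middle_informative; [auto|contradiction]. Qed.

Lemma Tdist_neq (a b : Tpt) : proj1_sig a <> proj1_sig b -> Tdist a b = d (proj1_sig a) (proj1_sig b) - t.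
Proof. intros E. unfold Tdist. destruct excluded_middle_informative; [contradiction|auto]. Qed.

Lemma T_finite : exists l : list Tpt, forall x, In x l.
Proof.
  exists (map (fun x => exist (fun y => rep y = y) (rep x) (rep_idem x)) (enum X)).
  intros [x px]. apply in_map_iff. exists x. split; [|apply enum_all].
  apply sig_eq. simpl. exact px.
Qed.

Lemma T_nonempty : inhabited Tpt.
Proof. destruct (fum_nonempty X) as [x]. constructor. exact (exist _ (rep x) (rep_idem x)). Qed.

Lemma T_nonneg a b : 0 <= Tdist a b.
Proof.
  destruct (classic (proj1_sig a = proj1_sig b)) as [E|E].
  - rewrite Tdist_eq; auto; lra.
  - pose proof (Tdist_pos a b E); lra.
Qed.

Lemma T_zero a b : Tdist a b = 0 <-> a = b.
Proof.
  split.
  - intros H. destruct (classic (proj1_sig a = proj1_sig b)) as [E|E].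
    + apply sig_eq; auto.
    + pose proof (Tdist_pos a b E); lra.
  - intros ->. apply Tdist_eq; auto.
Qed.

Lemma T_sym a b : Tdist a b = Tdist b a.
Proof.
  destruct (classic (proj1_sig a = proj1_sig b)) as [E|E].
  - rewrite !Tdist_eq; auto.
  - rewrite !Tdist_neq; auto. rewrite Defs.dist_sym; auto.
Qed.

Lemma T_ultra2 a b c : Tdist a b <= Tdist a c \/ Tdist a b <= Tdist b c.
Proof.
  destruct (classic (proj1_sig a = proj1_sig b)) as [Eab|Eab].
  { rewrite Tdist_eq by auto. left. apply T_nonneg. }
  destruct (classic (proj1_sig a = proj1_sig c)) as [Eac|Eac].
  { right. assert (b = b) by auto. assert (Ec : c = a) by (symmetry; apply sig_eq; auto). subst c.
    rewrite T_sym. lra. }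
  destruct (classic (proj1_sig b = proj1_sig c)) as [Ebc|Ebc].
  { left. assert (Ec : c = b) by (symmetry; apply sig_eq; auto). subst c. lra. }
  rewrite !Tdist_neq by auto.
  destruct (ultra2 X (proj1_sig a) (proj1_sig b) (proj1_sig c)); lra.
Qed.

Lemma T_ultra a b c : Tdist a b <= Rmax (Tdist a c) (Tdist b c).
Proof.
  destruct (T_ultra2 a b c) as [H|H].
  - eapply Rle_trans; [exact H|apply Rmax_l].
  - eapply Rle_trans; [exact H|apply Rmax_r].
Qed.

Definition T : FUM := mkFUM Tpt Tdist T_finite T_nonempty T_nonneg T_zero T_sym T_ultra.

End Trunc.

Definition surj {A B} (f : A -> B) := forall b, exists a, f a = b.
Definition trunc (X Z : FUM) (t : R) : Prop :=
  exists F : pt X -> pt Z, surj F /\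
    forall x y, udist Z (F x) (F y) = Rmax (udist X x y - t) 0.
Definition single (X : FUM) := forall x y : pt X, x = y.

Definition factor {A B C} (F : A -> B) (G : A -> C) (Fs : surj F) : B -> C :=
  fun b => G (proj1_sig (constructive_indefinite_description _ (Fs b))).
Lemma factor_spec {A B C} F G Fs : (forall a a', F a = F a' -> G a = G a') ->
  forall a, @factor A B C F G Fs (F a) = G a.
Proof.
  intros H a. unfold factor. destruct constructive_indefinite_description as [a' Ha']; simpl.
  apply H; auto.
Qed.

Lemma iso_common (I : Type) (A B : FUM) (F : I -> pt A) (G : I -> pt B) :
  surj F -> surj G -> (forall i j, udist B (G i) (G j) = udist A (F i) (F j)) -> isometric A B.
Proof.
  intros Fs Gs HD.
  assert (HFG : forall a a', F a = F a' -> G a = G a').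
  { intros a a' E. apply (dist_zero B). rewrite HD, E. apply d_refl. }
  exists (factor F G Fs). split; [|split].
  - intros x y E. destruct (Fs x) as [i <-], (Fs y) as [j <-].
    rewrite !factor_spec in E by auto. apply (dist_zero A). rewrite <- HD, E. apply d_refl.
  - intros y. destruct (Gs y) as [i <-]. exists (F i). apply factor_spec; auto.
  - intros x y. destruct (Fs x) as [i <-], (Fs y) as [j <-]. rewrite !factor_spec by auto. apply HD.
Qed.

Lemma isometric_sym A B : isometric A B -> isometric B A.
Proof.
  intros [f [fi [fs fd]]]. apply (iso_common (pt A) B A f (fun x => x)); auto.
  intros b. exists b; auto.
Qed.

Lemma evol_cons (Q : quiver) A0 A1 l :
  evolution Q A0 (A1 :: l) <-> inhabited (edge Q A1 A0) /\ evolution Q A1 l.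
Proof.
  split.
  - intros H. split.
    + apply (H 0%nat); reflexivity.
    + intros k a b Ha Hb. apply (H (S k)); auto.
  - intros [He H] k a b Ha Hb. destruct k as [|k].
    + simpl in Ha, Hb. inversion Ha; inversion Hb; subst; auto.
    + apply (H k); auto.
Qed.

Lemma evol_nil (Q : quiver) A : evolution Q A [].
Proof. intros k a b _ H. destruct k; simpl in H; [discriminate|destruct k; discriminate]. Qed.

Lemma last_cons {A} (a d : A) l : last (a :: l) d = last l a.
Proof.
  revert a d. induction l as [|b l IH]; intros a d; [reflexivity|].
  change (last (b :: l) d = last (b :: l) a). rewrite (IH b d), (IH b a). reflexivity.
Qed.

Lemma last_map {A B} (f : A -> B) l d : last (map f l) (f d) = f (last l d).
Proof.
  revert d. induction l as [|b l IH]; intros d; [reflexivity|].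
  simpl map. rewrite last_cons, last_cons. apply IH.
Qed.

Lemma iso_isotypic A B : isometric A B -> isotypic Uquiver A B.
Proof.
  intros H. split.
  - exists [B]. split; [|reflexivity]. apply evol_cons. split; [|apply evol_nil].
    destruct (isometric_sym _ _ H) as [g Hg]. constructor. exists g. left; auto.
  - exists [A]. split; [|reflexivity]. apply evol_cons. split; [|apply evol_nil].
    destruct H as [f Hf]. constructor. exists f. left; auto.
Qed.

Lemma Rmax_id r : 0 <= r -> Rmax r 0 = r.
Proof. intros; apply Rmax_left; lra. Qed.
Lemma Rmax_z r : r <= 0 -> Rmax r 0 = 0.
Proof. intros; apply Rmax_right; lra. Qed.
Lemma Rmax_cases r : (0 <= r /\ Rmax r 0 = r) \/ (r < 0 /\ Rmax r 0 = 0).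
Proof. destruct (Rle_dec 0 r); [left; split; [lra|apply Rmax_id; lra]|right; split; [lra|apply Rmax_z; lra]]. Qed.

Lemma trunc_refl X : trunc X X 0.
Proof.
  exists (fun x => x). split; [intros b; exists b; auto|].
  intros x y. rewrite Rminus_0_r, Rmax_id; auto. apply dist_nonneg.
Qed.

Lemma trunc_iso X Y Z t : trunc X Y t -> trunc X Z t -> isometric Y Z.
Proof.
  intros [F [Fs FD]] [G [Gs GD]]. apply (iso_common (pt X) Y Z F G Fs Gs).
  intros i j. rewrite FD, GD. auto.
Qed.

Lemma trunc_single X Z t : trunc X Z t -> (forall x y, udist X x y <= t) -> single Z.
Proof.
  intros [F [Fs FD]] H z1 z2. destruct (Fs z1) as [x <-], (Fs z2) as [y <-].
  apply (dist_zero Z). rewrite FD. apply Rmax_z. specialize (H x y). lra.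
Qed.

Lemma single_bound X Z t : trunc X Z t -> single Z -> forall x y, udist X x y <= t.
Proof.
  intros [F [Fs FD]] S x y. specialize (FD x y). rewrite (S (F x) (F y)), d_refl in FD.
  pose proof (Rmax_l (udist X x y - t) 0). lra.
Qed.

Lemma single_image X Z t : trunc X Z t -> single X -> single Z.
Proof. intros [F [Fs FD]] S z1 z2. destruct (Fs z1) as [x <-], (Fs z2) as [y <-]. rewrite (S x y); auto. Qed.

Lemma dist_pos_neq (X : FUM) a b : a <> b -> 0 < udist X a b.
Proof.
  intros N. pose proof (dist_nonneg X a b). destruct (Req_dec (udist X a b) 0) as [E|E]; [|lra].
  apply (dist_zero X) in E. contradiction.
Qed.

Lemma trunc_edge X Y Z s : trunc X Y s -> 0 <= s -> inhabited (U_edge Y Z) ->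
  exists s', s <= s' /\ trunc X Z s' /\ forall x y, udist X x y <= s \/ s' <= udist X x y.
Proof.
  intros [F [Fs FD]] Hs [[f [Hf|Hf]]].
  - destruct Hf as [fi [fs fd]]. exists s. split; [lra|]. split.
    + exists (fun x => f (F x)). split.
      * intros z. destruct (fs z) as [y <-]. destruct (Fs y) as [x <-]. eauto.
      * intros x y. rewrite fd. apply FD.
    + intros x y. destruct (Rle_dec (udist X x y) s); [left|right]; lra.
  - destruct Hf as [eps [He [fs fd]]].
    assert (key : forall x y, s < udist X x y ->
               udist Z (f (F x)) (f (F y)) = udist X x y - s - eps).
    { intros x y H. assert (F x <> F y).
      { intros E. specialize (FD x y). rewrite E, d_refl, Rmax_id in FD; lra. }
      rewrite fd by auto. rewrite FD, Rmax_id by lra. lra. }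
    exists (s + eps). split; [lra|]. split.
    + exists (fun x => f (F x)). split.
      * intros z. destruct (fs z) as [y <-]. destruct (Fs y) as [x <-]. eauto.
      * intros x y. destruct (Rle_dec (udist X x y) s) as [H|H].
        -- assert (E : F x = F y).
           { apply (dist_zero Y). rewrite FD. apply Rmax_z. lra. }
           rewrite E, d_refl. symmetry. apply Rmax_z. lra.
        -- rewrite key by lra. pose proof (dist_nonneg Z (f (F x)) (f (F y))).
           rewrite key in H0 by lra. rewrite Rmax_id; lra.
    + intros x y. destruct (Rle_dec (udist X x y) s) as [H|H]; [left; lra|right].
      pose proof (dist_nonneg Z (f (F x)) (f (F y))). rewrite key in H0 by lra. lra.
Qed.

Lemma edge_of_trunc X Y Z s t : trunc X Y s -> trunc X Z t -> 0 <= s -> s < t ->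
  (forall x y, udist X x y <= s \/ t <= udist X x y) -> inhabited (U_edge Y Z).
Proof.
  intros [F [Fs FD]] [G [Gs GD]] Hs Hst Hgap.
  assert (HFG : forall a a', F a = F a' -> G a = G a').
  { intros a a' E. apply (dist_zero Z). rewrite GD. apply Rmax_z.
    pose proof (FD a a') as H. rewrite E, d_refl in H. pose proof (Rmax_l (udist X a a' - s) 0). lra. }
  constructor. exists (factor F G Fs). right. exists (t - s). split; [lra|]. split.
  - intros z. destruct (Gs z) as [x <-]. exists (F x). apply factor_spec; auto.
  - intros a b N. destruct (Fs a) as [x <-], (Fs b) as [y <-]. rewrite !factor_spec by auto.
    assert (P : s < udist X x y).
    { destruct (Rle_dec (udist X x y) s) as [H|H]; [|lra]. exfalso. apply N.
      apply (dist_zero Y). rewrite FD. apply Rmax_z. lra. }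
    destruct (Hgap x y) as [H|H]; [lra|]. rewrite FD, GD, !Rmax_id by lra. lra.
Qed.

Lemma trunc_T X t : 0 <= t -> trunc X (T X t) t.
Proof.
  intros Ht. assert (Hm : Rmax t 0 = t) by (apply Rmax_id; auto).
  exists (fun x => exist (fun y => rep X t y = y) (rep X t x) (rep_idem X t x)). split.
  - intros [x px]. exists x. apply sig_eq. simpl. exact px.
  - intros x y. simpl. destruct (Rle_dec (udist X x y) t) as [H|H].
    + rewrite Tdist_eq; simpl. { symmetry; apply Rmax_z; lra. }
      apply rep_eq. lra.
    + rewrite Tdist_neq; simpl.
      2:{ intros E. apply rep_eq_iff in E. lra. }
      rewrite Rmax_id by lra. f_equal.
      pose proof (rep_rel X t x) as H1. pose proof (rep_rel X t y) as H2. rewrite Hm in H1, H2.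
      set (rx := rep X t x) in *. set (ry := rep X t y) in *.
      assert (iso1 : forall a a' b, udist X a a' <= t -> t < udist X a b -> udist X a' b = udist X a b).
      { intros a a' b E1 E2.
        pose proof (ultra2 X a' b a). pose proof (ultra2 X a b a').
        pose proof (Defs.dist_sym X a a'). pose proof (Defs.dist_sym X a b). pose proof (Defs.dist_sym X b a'). lra. }
      assert (E1 : udist X rx y = udist X x y) by (apply iso1; lra).
      rewrite Defs.dist_sym. rewrite (Defs.dist_sym X x y) in *.
      rewrite <- E1. rewrite (Defs.dist_sym X rx y). apply iso1; auto.
      rewrite (Defs.dist_sym X rx y) in E1. lra.
Qed.

Lemma trunc_comp X Y Z s t : trunc X Y s -> trunc Y Z t -> 0 <= s -> 0 <= t -> trunc X Z (s + t).
Proof.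
  intros [F [Fs FD]] [G [Gs GD]] Hs Ht. exists (fun x => G (F x)). split.
  - intros z. destruct (Gs z) as [y <-]. destruct (Fs y) as [x <-]. eauto.
  - intros x y. rewrite GD, FD.
    destruct (Rmax_cases (udist X x y - s)) as [[A B]|[A B]]; rewrite B.
    + f_equal; lra.
    + rewrite Rmax_z by lra. rewrite Rmax_z by lra. auto.
Qed.

Lemma evol_trunc : forall (l : list FUM) (B0 : FUM), evolution Uquiver B0 l ->
  exists ts : list R, length ts = S (length l) /\
    (forall j, (j <= length l)%nat -> trunc (last l B0) (nth j (B0 :: l) B0) (nth j ts 0)) /\
    (forall i j, (i <= j)%nat -> (j <= length l)%nat -> nth j ts 0 <= nth i ts 0) /\
    (forall x y, udist (last l B0) x y <= nth 0 ts 0 ->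
       exists j, (j <= length l)%nat /\ nth j ts 0 = udist (last l B0) x y) /\
    (forall j, 0 <= nth j ts 0).
Proof.
  induction l as [|B1 l IH]; intros B0 Hev.
  - exists [0]. simpl. split; [reflexivity|]. split; [|split; [|split]].
    + intros j Hj. assert (j = 0%nat) by lia. subst. apply trunc_refl.
    + intros i j Hi Hj. assert (j = 0%nat) by lia. assert (i = 0%nat) by lia. subst. lra.
    + intros x y H. exists 0%nat. split; [lia|]. pose proof (dist_nonneg B0 x y). simpl. lra.
    + intros [|[|j]]; simpl; lra.
  - apply evol_cons in Hev. destruct Hev as [He Hev].
    destruct (IH B1 Hev) as [ts [Hlen [Htr [Hmon [Hhit Hpos]]]]].
    rewrite last_cons. set (X := last l B1) in *.
    destruct (trunc_edge X B1 B0 (nth 0 ts 0) (Htr 0%nat ltac:(lia)) (Hpos 0%nat) He)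
      as [s' [Hs' [Htr' Hgap]]].
    exists (s' :: ts). simpl length. split; [lia|]. split; [|split; [|split]].
    + intros [|j] Hj; [exact Htr'|]. change (nth (S j) (B0 :: B1 :: l) B0) with (nth j (B1 :: l) B0).
      rewrite (nth_indep (B1 :: l) B0 B1) by (simpl; lia). apply Htr. simpl in Hj; lia.
    + intros [|i] [|j] Hi Hj; simpl; try lra; try lia.
      * pose proof (Hmon 0%nat j ltac:(lia) ltac:(lia)). lra.
      * apply Hmon; lia.
    + intros x y H. simpl in H. destruct (Rle_dec s' (udist X x y)) as [H'|H'].
      * exists 0%nat. split; [lia|]. simpl. lra.
      * destruct (Hgap x y) as [G|G]; [|lra].
        destruct (Hhit x y G) as [j [Hj Ej]]. exists (S j). split; [lia|]. simpl. auto.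
    + intros [|j]; simpl; [pose proof (Hpos 0%nat); lra|apply Hpos].
Qed.

Lemma ancestor_trunc A B : ancestor Uquiver A B -> exists t, 0 <= t /\ trunc B A t.
Proof.
  intros [l [Hev Hl]]. destruct (evol_trunc l A Hev) as [ts [_ [Htr [_ [_ Hpos]]]]].
  exists (nth 0 ts 0). split; [apply Hpos|]. rewrite <- Hl. apply (Htr 0%nat). lia.
Qed.

Lemma max_ex {A} (f : A -> R) (L : list A) : L <> [] -> exists a, In a L /\ forall x, In x L -> f x <= f a.
Proof.
  induction L as [|b L IH]; intros N; [contradiction|].
  destruct L as [|c L'].
  - exists b. split; [left; auto|]. intros x [<-|[]]. lra.
  - destruct (IH ltac:(discriminate)) as [a [Ha Hm]].
    destruct (Rle_dec (f b) (f a)).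
    + exists a. split; [right; auto|]. intros x [<-|Hx]; auto.
    + exists b. split; [left; auto|]. intros x [<-|Hx]; [lra|]. specialize (Hm x Hx). lra.
Qed.

Lemma max_pair (X : FUM) : exists a b, forall x y, udist X x y <= udist X a b.
Proof.
  destruct (fum_nonempty X) as [x0].
  destruct (max_ex (fun p => udist X (fst p) (snd p)) (list_prod (enum X) (enum X))) as [[a b] [_ H]].
  - intros E. assert (In (x0, x0) (list_prod (enum X) (enum X))) by (apply in_prod_iff; split; apply enum_all).
    rewrite E in H. destruct H.
  - exists a, b. intros x y. apply (H (x, y)). apply in_prod_iff; split; apply enum_all.
Qed.

Lemma single_dist (X : FUM) : (forall x y, udist X x y <= 0) -> single X.
Proof. intros H x y. apply (dist_zero X). pose proof (dist_nonneg X x y). specialize (H x y). lra. Qed.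

Lemma self_trunc X u : trunc X X u -> 0 < u -> single X.
Proof.
  intros [H [Hs HD]] Hu. destruct (max_pair X) as [a [b Hab]]. apply single_dist.
  intros x y. destruct (Hs a) as [x' Ex], (Hs b) as [y' Ey].
  pose proof (HD x' y') as E. rewrite Ex, Ey in E. pose proof (Hab x' y').
  pose proof (Hab x y). destruct (Rmax_cases (udist X x' y' - u)) as [[A B]|[A B]]; lra.
Qed.

Lemma isotypic_isometric A B : isotypic Uquiver A B -> isometric A B.
Proof.
  intros [H1 H2]. destruct (ancestor_trunc A B H1) as [t0 [Ht0 T0]].
  destruct (ancestor_trunc B A H2) as [t1 [Ht1 T1]].
  destruct (Req_dec t0 0) as [E|E].
  - subst t0. apply isometric_sym. apply (trunc_iso B B A 0); auto. apply trunc_refl.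
  - assert (SB : single B) by (apply (self_trunc B (t0 + t1)); [apply (trunc_comp B A B); auto|lra]).
    pose proof (single_image B A t0 T0 SB) as SA.
    destruct T0 as [F [Fs _]]. apply (iso_common (pt B) A B F (fun x => x) Fs).
    + intros b; exists b; auto.
    + intros i j. replace j with i by apply SB. rewrite !d_refl. auto.
Qed.

Lemma part1 X Y : isotypic Uquiver X Y <-> isometric X Y.
Proof. split; [apply isotypic_isometric|apply iso_isotypic]. Qed.

Lemma single_primitive A : single A -> primitive_vertex Uquiver A.
Proof.
  intros SA B HB. apply iso_isotypic. destruct (ancestor_trunc B A HB) as [t [_ Tr]].
  pose proof (single_image A B t Tr SA) as SB.
  destruct Tr as [F [Fs _]]. apply (iso_common (pt A) B A F (fun x => x) Fs).
  - intros b; exists b; auto.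
  - intros i j. replace j with i by apply SA. rewrite !d_refl. auto.
Qed.

Lemma isometric_single A B : isometric A B -> single A -> single B.
Proof. intros [f [_ [fs _]]] S b1 b2. destruct (fs b1) as [x <-], (fs b2) as [y <-]. rewrite (S x y). auto. Qed.

Definition sdec (l : list R) := forall i j a b, (i < j)%nat ->
  nth_error l i = Some a -> nth_error l j = Some b -> b < a.

Lemma sdec_nil : sdec [].
Proof. intros [|i] j a b _ H; discriminate. Qed.

Lemma sdec_cons a l : (forall y, In y l -> y < a) -> sdec l -> sdec (a :: l).
Proof.
  intros H1 H2 [|i] [|j] x y Hij Hi Hj; try lia.
  - simpl in Hi, Hj. inversion Hi; subst. apply H1. eapply nth_error_In; eauto.
  - simpl in Hi, Hj. apply (H2 i j); auto; lia.
Qed.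

Lemma sdec_inv a l : sdec (a :: l) -> (forall y, In y l -> y < a) /\ sdec l.
Proof.
  intros H. split.
  - intros y Hy. destruct (In_nth_error _ _ Hy) as [j Hj]. apply (H 0%nat (S j)); auto. lia.
  - intros i j x y Hij Hi Hj. apply (H (S i) (S j)); auto. lia.
Qed.

Lemma sdec_le l i j a b : sdec l -> (i <= j)%nat -> nth_error l i = Some a -> nth_error l j = Some b -> b <= a.
Proof.
  intros H Hij Hi Hj. destruct (Nat.eq_dec i j) as [->|N].
  - rewrite Hi in Hj. inversion Hj; lra.
  - pose proof (H i j a b ltac:(lia) Hi Hj). lra.
Qed.

Lemma ins_ex a : forall l, sdec l -> exists l', (forall x, In x l' <-> x = a \/ In x l) /\ sdec l'.
Proof.
  induction l as [|b l IH]; intros Hs.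
  - exists [a]. split; [intros x; simpl; intuition|]. apply sdec_cons; [intros y []|apply sdec_nil].
  - destruct (sdec_inv _ _ Hs) as [Hb Hl].
    destruct (total_order_T a b) as [[Lt|Eq]|Gt].
    + destruct (IH Hl) as [l' [Hin Hs']]. exists (b :: l'). split.
      * intros x. simpl. rewrite Hin. intuition.
      * apply sdec_cons; auto. intros y Hy. apply Hin in Hy. destruct Hy as [->|Hy]; auto.
    + subst. exists (b :: l). split; auto. intros x. simpl. intuition.
    + exists (a :: b :: l). split.
      * intros x. simpl. intuition.
      * apply sdec_cons; auto. intros y [<-|Hy]; auto. specialize (Hb y Hy). lra.
Qed.

Lemma sort_ex (l : list R) : exists l', (forall x, In x l <-> In x l') /\ sdec l'.
Proof.
  induction l as [|a l [l' [Hin Hs]]].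
  - exists []. split; [intros x; simpl; tauto|apply sdec_nil].
  - destruct (ins_ex a l' Hs) as [l'' [Hin' Hs']]. exists l''. split; auto.
    intros x. rewrite Hin'. simpl. rewrite Hin. intuition.
Qed.

Lemma sdec_NoDup l : sdec l -> NoDup l.
Proof.
  intros H. apply NoDup_nth_error. intros i j Hi E.
  destruct (nth_error l i) as [a|] eqn:Ea.
  2:{ apply nth_error_None in Ea. lia. }
  destruct (Nat.lt_total i j) as [L|[L|L]]; auto.
  - pose proof (H i j a a L Ea (eq_sym E)). lra.
  - pose proof (H j i a a L (eq_sym E) Ea). lra.
Qed.

Definition dlist (X : FUM) : list R :=
  map (fun p => udist X (fst p) (snd p)) (list_prod (enum X) (enum X)).
Lemma dlist_in X r : In r (dlist X) <-> exists x y, udist X x y = r.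
Proof.
  unfold dlist. rewrite in_map_iff. split.
  - intros [[x y] [E _]]. eauto.
  - intros [x [y E]]. exists (x, y). split; auto. apply in_prod_iff; split; apply enum_all.
Qed.

Lemma vals_ex X : exists v0 vs, (forall r, In r (v0 :: vs) <-> exists x y, udist X x y = r) /\ sdec (v0 :: vs).
Proof.
  destruct (sort_ex (dlist X)) as [l [Hin Hs]]. destruct (fum_nonempty X) as [x0].
  destruct l as [|v0 vs].
  - exfalso. assert (In (udist X x0 x0) (dlist X)) by (apply dlist_in; eauto). apply Hin in H. destruct H.
  - exists v0, vs. split; auto. intros r. rewrite <- Hin. apply dlist_in.
Qed.

Lemma last_min a l : sdec (a :: l) -> forall x, In x (a :: l) -> last l a <= x.
Proof.
  revert a. induction l as [|b l IH]; intros a Hs x Hx.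
  - destruct Hx as [<-|[]]. simpl. lra.
  - rewrite last_cons. destruct (sdec_inv _ _ Hs) as [H1 H2]. destruct Hx as [<-|Hx].
    + pose proof (IH b H2 b (or_introl eq_refl)). pose proof (H1 b (or_introl eq_refl)). lra.
    + apply IH; auto.
Qed.

Lemma last_in {A} (a : A) l : In (last l a) (a :: l).
Proof.
  revert a. induction l as [|b l IH]; intros a; [left; auto|]. rewrite last_cons. right. apply IH.
Qed.

Definition Ch (X : FUM) (v : R) : FUM := if Req_dec_T v 0 then X else T X v.

Lemma trunc_C X v : 0 <= v -> trunc X (Ch X v) v.
Proof. intros H. unfold Ch. destruct Req_dec_T as [->|_]; [apply trunc_refl|apply trunc_T; auto]. Qed.

Section Chain.
Variable X : FUM.
Variable v0 : R.
Variable vs : list R.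
Hypothesis Hin : forall r, In r (v0 :: vs) <-> exists x y, udist X x y = r.
Hypothesis Hs : sdec (v0 :: vs).

Lemma vals_nonneg r : In r (v0 :: vs) -> 0 <= r.
Proof. intros H. apply Hin in H. destruct H as [x [y <-]]. apply dist_nonneg. Qed.

Lemma v0_max x y : udist X x y <= v0.
Proof.
  assert (H : In (udist X x y) (v0 :: vs)) by (apply Hin; eauto).
  destruct H as [<-|H]; [lra|]. destruct (sdec_inv _ _ Hs) as [H1 _]. specialize (H1 _ H). lra.
Qed.

Lemma last_zero : last vs v0 = 0.
Proof.
  pose proof (vals_nonneg _ (last_in v0 vs)).
  destruct (fum_nonempty X) as [x0].
  assert (In 0 (v0 :: vs)) by (apply Hin; exists x0, x0; apply d_refl).
  pose proof (last_min v0 vs Hs 0 H0). lra.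
Qed.

Lemma chain_evol : evolution Uquiver (Ch X v0) (map (Ch X) vs) /\ single (Ch X v0) /\
  last (map (Ch X) vs) (Ch X v0) = X.
Proof.
  split; [|split].
  - intros k A B HA HB. change (Ch X v0 :: map (Ch X) vs) with (map (Ch X) (v0 :: vs)) in HA, HB.
    rewrite nth_error_map in HA, HB.
    destruct (nth_error (v0 :: vs) k) as [a|] eqn:Ea; [|discriminate].
    destruct (nth_error (v0 :: vs) (S k)) as [b|] eqn:Eb; [|discriminate].
    simpl in HA, HB. inversion HA; inversion HB; subst.
    pose proof (Hs k (S k) a b ltac:(lia) Ea Eb).
    assert (Ha0 : 0 <= a) by (apply vals_nonneg; eapply nth_error_In; eauto).
    assert (Hb0 : 0 <= b) by (apply vals_nonneg; eapply nth_error_In; eauto).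
    apply (edge_of_trunc X (Ch X b) (Ch X a) b a); auto; try apply trunc_C; auto.
    intros x y. assert (Hr : In (udist X x y) (v0 :: vs)) by (apply Hin; eauto).
    destruct (In_nth_error _ _ Hr) as [m Em].
    destruct (Nat.le_gt_cases m k) as [L|L].
    + right. eapply sdec_le; eauto.
    + left. eapply sdec_le; eauto; lia.
  - apply (trunc_single X _ v0). { apply trunc_C. apply vals_nonneg. left; auto. }
    apply v0_max.
  - rewrite last_map, last_zero. unfold Ch. destruct Req_dec_T; [auto|contradiction].
Qed.

End Chain.

Lemma primitive_single X : primitive_vertex Uquiver X -> single X.
Proof.
  intros Hp. destruct (vals_ex X) as [v0 [vs [Hin Hs]]].
  destruct (chain_evol X v0 vs Hin Hs) as [Hev [Hsg Hl]].
  assert (Ha : ancestor Uquiver (Ch X v0) X) by (exists (map (Ch X) vs); auto).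
  pose proof (isotypic_isometric _ _ (Hp _ Ha)) as Hi. eapply isometric_single; eauto.
Qed.

Lemma chain_universal X v0 vs (Hin : forall r, In r (v0 :: vs) <-> exists x y, udist X x y = r)
  (Hs : sdec (v0 :: vs)) : universal_evolution Uquiver (Ch X v0) (map (Ch X) vs) X.
Proof.
  destruct (chain_evol X v0 vs Hin Hs) as [Hev [Hsg Hl]].
  split; [split; [auto|split; [apply single_primitive; auto|auto]]|].
  intros B0 l' [Hev' [Hp' Hl']].
  pose proof (primitive_single B0 Hp') as SB0.
  destruct (evol_trunc l' B0 Hev') as [ts [Hlen [Htr [Hmon [Hhit Hpos]]]]].
  assert (E : @last FUM l' B0 = X) by exact Hl'. rewrite E in Htr, Hhit.
  assert (Hbig : forall x y, udist X x y <= nth 0 ts 0).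
  { apply (single_bound X B0); auto. apply (Htr 0%nat). lia. }
  assert (Hr : forall i, exists j, (i <= length vs)%nat -> (j <= length l')%nat /\ nth j ts 0 = nth i (v0 :: vs) 0).
  { intros i. destruct (Nat.le_gt_cases i (length vs)) as [Li|Li].
    - assert (H : In (nth i (v0 :: vs) 0) (v0 :: vs)) by (apply nth_In; simpl; lia).
      apply Hin in H. destruct H as [x [y Exy]]. destruct (Hhit x y (Hbig x y)) as [j [Hj Ej]].
      exists j. intros _. rewrite <- Exy; auto.
    - exists 0%nat. intros; lia. }
  set (r := fun i => proj1_sig (constructive_indefinite_description _ (Hr i))).
  assert (Hrs : forall i, (i <= length vs)%nat -> (r i <= length l')%nat /\ nth (r i) ts 0 = nth i (v0 :: vs) 0).
  { intros i Hi. unfold r. destruct constructive_indefinite_description as [j Hj]. simpl. auto. }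
  assert (Hinc : forall i, (i < length vs)%nat -> (r i < r (S i))%nat).
  { intros i Hi. destruct (Hrs i ltac:(lia)) as [A1 B1]. destruct (Hrs (S i) ltac:(lia)) as [A2 B2].
    assert (Lt : nth (S i) (v0 :: vs) 0 < nth i (v0 :: vs) 0).
    { apply (Hs i (S i)); [lia| apply nth_error_nth'; simpl; lia | apply nth_error_nth'; simpl; lia]. }
    destruct (Nat.lt_ge_cases (r i) (r (S i))) as [L|L]; auto.
    pose proof (Hmon (r (S i)) (r i) L A1). lra. }
  assert (Hge : forall i, (i <= length vs)%nat -> (i <= r i)%nat).
  { induction i; intros Hi; [lia|]. pose proof (IHi ltac:(lia)). pose proof (Hinc i ltac:(lia)). lia. }
  unfold embeds. rewrite length_map.
  destruct (Hrs (length vs) (le_n _)) as [Hlast _]. pose proof (Hge (length vs) (le_n _)).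
  split; [lia|]. exists r. split; [auto|split; [auto|]].
  intros k Hk. change (Ch X v0 :: map (Ch X) vs) with (map (Ch X) (v0 :: vs)). rewrite map_nth.
  destruct (Hrs k Hk) as [Hk1 Hk2].
  apply iso_isotypic. apply (trunc_iso X _ _ (nth k (v0 :: vs) v0)).
  - apply trunc_C. apply (vals_nonneg X v0 vs Hin). apply nth_In. simpl; lia.
  - replace (nth k (v0 :: vs) v0) with (nth (r k) ts 0). { apply Htr; auto. }
    rewrite Hk2. apply nth_indep; simpl; lia.
Qed.

Lemma height_of X n : is_height Uquiver X n -> height Uquiver X = Some n.
Proof.
  intros [Hn1 Hn2]. unfold height. destruct (excluded_middle_informative _) as [H|H].
  - destruct (constructive_indefinite_description _ H) as [m [Hm1 Hm2]]. simpl. f_equal.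
    pose proof (Hm2 n Hn1). pose proof (Hn2 m Hm1). lia.
  - exfalso; apply H. exists n. split; auto.
Qed.

Definition enumS (X : FUM) (l : list R) := forall r, In r l <-> (r <> 0 /\ exists x y, udist X x y = r).

Lemma part3 X lS : NoDup lS -> enumS X lS -> height Uquiver X = Some (length lS).
Proof.
  intros Hnd HS. destruct (vals_ex X) as [v0 [vs [Hin Hs]]].
  assert (Hlen : length vs = length lS).
  { pose proof (sdec_NoDup _ Hs) as N1. destruct (fum_nonempty X) as [x0].
    assert (N2 : NoDup (0 :: lS)).
    { constructor; auto. intros H. apply HS in H. tauto. }
    assert (I1 : incl (0 :: lS) (v0 :: vs)).
    { intros r [<-|Hr]. - apply Hin. exists x0, x0. apply d_refl.
      - apply Hin. apply HS in Hr. tauto. }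
    assert (I2 : incl (v0 :: vs) (0 :: lS)).
    { intros r Hr. destruct (Req_dec r 0) as [->|Nz]; [left; auto|right].
      apply HS. split; auto. apply Hin; auto. }
    pose proof (NoDup_incl_length N2 I1). pose proof (NoDup_incl_length N1 I2). simpl in *. lia. }
  pose proof (chain_universal X v0 vs Hin Hs) as [Hfull U].
  apply height_of. rewrite <- Hlen. split.
  - exists (Ch X v0), (map (Ch X) vs). split; auto. apply length_map.
  - intros m [B0 [l' [Hf Hl]]]. destruct (U B0 l' Hf) as [Hle _]. rewrite length_map in Hle. lia.
Qed.

Lemma S_enum X : exists l, NoDup l /\ enumS X l.
Proof.
  destruct (vals_ex X) as [v0 [vs [Hin Hs]]].
  exists (filter (fun r => if Req_dec_T r 0 then false else true) (v0 :: vs)). split.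
  - apply NoDup_filter. apply sdec_NoDup; auto.
  - intros r. rewrite filter_In. rewrite Hin. destruct Req_dec_T; split; intros; try tauto; intuition; discriminate.
Qed.

Lemma filter_lt {A} (f : A -> bool) l x : In x l -> f x = false -> (length (filter f l) < length l)%nat.
Proof.
  induction l as [|a l IH]; intros Hx Hf; [destruct Hx|].
  destruct Hx as [->|Hx].
  - simpl. rewrite Hf. pose proof (filter_length_le f l). lia.
  - simpl. destruct (f a); simpl; pose proof (IH Hx Hf); lia.
Qed.

Definition gtb (t r : R) : bool := if Rlt_dec t r then true else false.

Lemma count_trunc A B t lA lB : trunc A B t -> 0 <= t -> NoDup lB -> enumS A lA -> enumS B lB ->
  (length lB <= length (filter (gtb t) lA))%nat.
Proof.
  intros [F [Fs FD]] Ht NB HA HB.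
  enough (Hen : (length lB <= length (map (fun r : R => (r - t)%R) (filter (gtb t) lA)))%nat)
    by (rewrite length_map in Hen; exact Hen).
  apply NoDup_incl_length; auto.
  intros r Hr. apply HB in Hr. destruct Hr as [Nz [b1 [b2 E]]].
  destruct (Fs b1) as [x <-], (Fs b2) as [y <-]. rewrite FD in E.
  destruct (Rmax_cases (udist A x y - t)) as [[P Q]|[P Q]]; rewrite Q in E; [|lra].
  apply in_map_iff. exists (udist A x y). split; [lra|]. apply filter_In. split.
  - apply HA. split; [lra|eauto].
  - unfold gtb. destruct Rlt_dec; auto. lra.
Qed.

Lemma monotonous_U : monotonous Uquiver.
Proof.
  intros A B e. destruct (trunc_edge A A B 0 (trunc_refl A) (Rle_refl 0) (inhabits e)) as [s [Hs [Tr _]]].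
  destruct (S_enum A) as [lA [NA HA]], (S_enum B) as [lB [NB HB]].
  rewrite (part3 A lA), (part3 B lB) by auto. simpl.
  pose proof (count_trunc A B s lA lB Tr Hs NB HA HB). pose proof (filter_length_le (gtb s) lA). lia.
Qed.

Lemma regular_U A : regular Uquiver A.
Proof.
  intros B Hanc Hh. destruct (ancestor_trunc A B Hanc) as [t [Ht Tr]].
  destruct (Req_dec t 0) as [->|Nt].
  - destruct (trunc_iso B B A 0 (trunc_refl B) Tr) as [f Hf]. constructor. exists f. left; auto.
  - destruct (classic (forall x y, udist B x y <= 0 \/ t <= udist B x y)) as [G|G].
    + apply (edge_of_trunc B B A 0 t (trunc_refl B) Tr); auto; lra.
    + exfalso. apply not_all_ex_not in G. destruct G as [x G]. apply not_all_ex_not in G. destruct G as [y G].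
      destruct (S_enum A) as [lA [NA HA]], (S_enum B) as [lB [NB HB]].
      rewrite (part3 A lA), (part3 B lB) in Hh by auto. injection Hh as Hh.
      pose proof (count_trunc B A t lB lA Tr Ht NA HB HA).
      assert (In (udist B x y) lB) by (apply HB; split; [lra|eauto]).
      assert (gtb t (udist B x y) = false) by (unfold gtb; destruct Rlt_dec; auto; lra).
      pose proof (filter_lt _ _ _ H0 H1). lia.
Qed.

Definition cls (X : FUM) : (nat -> nat -> R) -> bool := fun m =>
  if excluded_middle_informative (exists e : nat -> pt X, surj e /\ forall i j, m i j = udist X (e i) (e j))
  then true else false.

Lemma small_U : small Uquiver.
Proof.
  exists ((nat -> nat -> R) -> bool), cls. intros A B. split.
  - intros H. apply isotypic_isometric in H.
    assert (side : forall A B, isometric A B -> forall m,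
      (exists e : nat -> pt A, surj e /\ forall i j, m i j = udist A (e i) (e j)) ->
      (exists e : nat -> pt B, surj e /\ forall i j, m i j = udist B (e i) (e j))).
    { clear. intros A B [f [fi [fs fd]]] m [e [es ed]]. exists (fun i => f (e i)). split.
      - intros b. destruct (fs b) as [a <-]. destruct (es a) as [i <-]. eauto.
      - intros i j. rewrite fd. auto. }
    apply functional_extensionality. intros m. unfold cls.
    destruct (excluded_middle_informative _) as [H1|H1], (excluded_middle_informative _) as [H2|H2]; auto.
    + exfalso. apply H2. eapply side; eauto.
    + exfalso. apply H1. eapply side; [apply isometric_sym|]; eauto.
  - intros E. apply iso_isotypic. destruct (fum_nonempty A) as [a0].
    set (eA := fun i => nth i (enum A) a0).
    assert (sA : surj eA).
    { intros a. destruct (In_nth _ _ a0 (enum_all A a)) as [i [_ Hi]]. exists i. auto. }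
    set (m := fun i j => udist A (eA i) (eA j)).
    assert (Hm : cls A m = true).
    { unfold cls. destruct excluded_middle_informative as [_|N]; auto. exfalso. apply N. exists eA. split; auto. }
    rewrite E in Hm. unfold cls in Hm. destruct excluded_middle_informative as [[eB [sB dB]]|_]; [|discriminate].
    apply (iso_common nat A B eA eB sA sB). intros i j. rewrite <- dB. auto.
Qed.

Theorem mainTheorem1 :
  (forall X Y : FUM, isotypic Uquiver X Y <-> isometric X Y) /\
  (forall X : FUM, primitive_vertex Uquiver X <-> exists x : pt X, forall y, y = x) /\
  (forall (X : FUM) (l : list R),
      NoDup l ->
      (forall r, In r l <-> (r <> 0 /\ exists x y, udist X x y = r)) ->
      height Uquiver X = Some (length l)) /\
  phylogenetic Uquiver /\
  (forall X : FUM, regular Uquiver X).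
Proof.
  split; [exact part1|]. split; [|split; [|split; [|exact regular_U]]].
  - intros X. split.
    + intros H. pose proof (primitive_single X H) as S. destruct (fum_nonempty X) as [x]. exists x. intros y. apply S.
    + intros [x Hx]. apply single_primitive. intros a b. rewrite (Hx a), (Hx b). auto.
  - intros X l N H. apply part3; auto.
  - split; [exact small_U|split; [exact monotonous_U|]].
    intros X. destruct (vals_ex X) as [v0 [vs [Hin Hs]]]. exists (Ch X v0), (map (Ch X) vs).
    apply chain_universal; auto.
Qed.
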